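(* Let $\mathcal F$ be a left-invariant ideal on a group $G$ that is $h$-invariant for an isomorphism $h:H\to K$ between torsion-free subgroups $K\subset H$ of $G$, and suppose there is $z\in H$ commuting with every element of $K$ with $z^2\notin K$. Let $\kappa$ be an infinite cardinal and suppose there are isomorphisms $h_n:H\to H_n$ ($n\in\kappa$) onto subgroups $H_n\subset H$ such that $\mathcal F$ is $h_n$-invariant for every $n$ and $H_nH_m\cap H_kH_l=\{e\}$ for all $n,m,k,l\in\kappa$ with $\{n,m\}\cap\{k,l\}=\emptyset$. If $\tau(\mathcal F)\cap\mathcal P_H\not\subset\mathcal F$, then $\tau^\alpha(\mathcal F)\ne\tau^{<\alpha}(\mathcal F)$ for all ordinals $\alpha<\kappa^+$.
   Context: For an isomorphism $g:H_1\to K_1$ between subgroups of $G$, $\mathcal F$ is $g$-invariant if for every $A\subset H_1$: $A\in\mathcal F$ iff $g(A)\in\mathcal F$. An ideal is closed under subsets and finite unions; left-invariant: $xF\in\mathcal F$ for $F\in\mathcal F$, $x\in G$. $\mathcal P_H$ is the family of subsets of $H$; $\kappa^+$ is the successor cardinal. $\tau(\mathcal F)=\{A\subset G: xA\cap yA\in\mathcal F$ for all distinct $x,y\in G\}$, $\tau^0(\mathcal F)=\mathcal F$, $\tau^{<\alpha}(\mathcal F)=\bigcup_{\beta<\alpha}\tau^\beta(\mathcal F)$, $\tau^\alpha(\mathcal F)=\tau(\tau^{<\alpha}(\mathcal F))$ for $\alpha>0$. *)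

(* Defs.v *)
Set Implicit Arguments.

Record Group := {
  carrier :> Type;
  gmul : carrier -> carrier -> carrier;
  ginv : carrier -> carrier;
  gone : carrier;
  gmul_assoc : forall x y z, gmul x (gmul y z) = gmul (gmul x y) z;
  gmul_1l : forall x, gmul gone x = x;
  gmul_1r : forall x, gmul x gone = x;
  gmul_Vl : forall x, gmul (ginv x) x = gone;
  gmul_Vr : forall x, gmul x (ginv x) = gone
}.

Arguments gmul {_} _ _.
Arguments ginv {_} _.

Section Defs.
Variable G : Group.

Definition gset := G -> Prop.
Definition family := gset -> Prop.

Definition subset (A B : gset) : Prop := forall g, A g -> B g.
Definition inter (A B : gset) : gset := fun g => A g /\ B g.
Definition union (A B : gset) : gset := fun g => A g \/ B g.

Definition ltrans (x : G) (A : gset) : gset := fun g => A (gmul (ginv x) g).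

Definition image (f : G -> G) (A : gset) : gset :=
  fun g => exists a, A a /\ f a = g.

Definition prodset (A B : gset) : gset :=
  fun g => exists a b, A a /\ B b /\ gmul a b = g.

Fixpoint gpow (x : G) (n : nat) : G :=
  match n with O => gone G | S k => gmul x (gpow x k) end.

Definition subgroup (H : gset) : Prop :=
  H (gone G) /\ (forall x y, H x -> H y -> H (gmul x y)) /\
  (forall x, H x -> H (ginv x)).

Definition torsion_free (H : gset) : Prop :=
  forall x, H x -> x <> gone G -> forall n, gpow x (S n) <> gone G.

Definition subgroup_iso (f : G -> G) (H K : gset) : Prop :=
  (forall a, H a -> K (f a)) /\
  (forall a b, H a -> H b -> f a = f b -> a = b) /\
  (forall c, K c -> exists a, H a /\ f a = c) /\
  (forall a b, H a -> H b -> f (gmul a b) = gmul (f a) (f b)).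

Definition invariant_under (F : family) (f : G -> G) (H : gset) : Prop :=
  forall A, subset A H -> (F A <-> F (image f A)).

Definition ideal (F : family) : Prop :=
  (forall A B, F A -> subset B A -> F B) /\
  (forall A B, F A -> F B -> F (union A B)).

Definition left_invariant (F : family) : Prop :=
  forall A x, F A -> F (ltrans x A).

Definition tau (F : family) : family :=
  fun A => forall x y : G, x <> y -> F (inter (ltrans x A) (ltrans y A)).

(* Transfinite iteration of tau indexed by a well-ordered type (W, lt):
   the element w stands for the ordinal = order type of {b | lt b w}.
   tauIter w = F if w is the least element (ordinal 0),
   tauIter w = tau (tauLt w) otherwise, where tauLt w = ⋃_{b<w} tauIter b. *)
Definition tauIter (F : family) (W : Type) (lt : W -> W -> Prop)
  (wf : well_founded lt) : W -> family :=
  Fix wf (fun _ => family)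
    (fun w rec => fun A =>
       ((forall b, ~ lt b w) /\ F A) \/
       ((exists b, lt b w) /\
        tau (fun B => exists b (h : lt b w), rec b h B) A)).

Definition tauLt (F : family) (W : Type) (lt : W -> W -> Prop)
  (wf : well_founded lt) (w : W) : family :=
  fun A => exists b, lt b w /\ tauIter F wf b A.

End Defs.

Definition strict_total_order (W : Type) (lt : W -> W -> Prop) : Prop :=
  (forall a b c, lt a b -> lt b c -> lt a c) /\
  (forall a b, lt a b \/ a = b \/ lt b a).

(* Main.v *)
Require Import Defs.
From Stdlib Require Import Classical FunctionalExtensionality PropExtensionality List Lia Arith.
From Stdlib Require FinFun.
From Stdlib Require Import ClassicalEpsilon.
Import ListNotations.
Set Implicit Arguments. Unset Strict Implicit.


Lemma gcancel_l (G : Group) (a b c : G) : gmul a b = gmul a c -> b = c.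
Proof.
  intro E. rewrite <- (gmul_1l G b), <- (gmul_1l G c), <- (gmul_Vl G a),
    <- !gmul_assoc, E. reflexivity.
Qed.

Lemma gcancel_r (G : Group) (a b c : G) : gmul b a = gmul c a -> b = c.
Proof.
  intro E. rewrite <- (gmul_1r G b), <- (gmul_1r G c), <- (gmul_Vr G a),
    !gmul_assoc, E. reflexivity.
Qed.

Lemma ginv_inv (G : Group) (a : G) : ginv (ginv a) = a.
Proof. apply (gcancel_l (a:=ginv a)). rewrite gmul_Vr, gmul_Vl. reflexivity. Qed.

Lemma ginv_one (G : Group) : ginv (gone G) = gone G.
Proof. rewrite <- (gmul_1r G (ginv (gone G))). apply gmul_Vl. Qed.

Lemma ginv_mul (G : Group) (a b : G) : ginv (gmul a b) = gmul (ginv b) (ginv a).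
Proof.
  apply (gcancel_l (a:=gmul a b)). rewrite gmul_Vr.
  rewrite gmul_assoc, <- (gmul_assoc G a b), gmul_Vr, gmul_1r, gmul_Vr. reflexivity.
Qed.

Lemma gsolve_l (G : Group) (a b c : G) : gmul a b = c -> b = gmul (ginv a) c.
Proof. intro E. subst. rewrite gmul_assoc, gmul_Vl, gmul_1l. reflexivity. Qed.

Lemma gsolve_r (G : Group) (a b c : G) : gmul a b = c -> a = gmul c (ginv b).
Proof. intro E. subst. rewrite <- gmul_assoc, gmul_Vr, gmul_1r. reflexivity. Qed.

Lemma gmulKV (G : Group) (a b : G) : gmul a (gmul (ginv a) b) = b.
Proof. rewrite gmul_assoc, gmul_Vr, gmul_1l. reflexivity. Qed.
Lemma gmulVK (G : Group) (a b : G) : gmul (ginv a) (gmul a b) = b.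
Proof. rewrite gmul_assoc, gmul_Vl, gmul_1l. reflexivity. Qed.

Lemma ginv_eq1 (G : Group) (a : G) : ginv a = gone G -> a = gone G.
Proof. intro E. rewrite <- (ginv_inv a), E. apply ginv_one. Qed.

Lemma sub_inv (G : Group) (H : gset G) a : subgroup H -> H (ginv a) -> H a.
Proof. intros [_ [_ Hi]] Ha. rewrite <- (ginv_inv a). auto. Qed.

Lemma sub_mul (G : Group) (H : gset G) a b : subgroup H -> H a -> H b -> H (gmul a b).
Proof. intros [_ [Hm _]]. auto. Qed.
Lemma sub_one (G : Group) (H : gset G) : subgroup H -> H (gone G).
Proof. intros [H1 _]. auto. Qed.
Lemma sub_inv' (G : Group) (H : gset G) a : subgroup H -> H a -> H (ginv a).
Proof. intros [_ [_ Hi]]. auto. Qed.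

Lemma iso_one (G : Group) (f : G -> G) H K : subgroup H -> subgroup_iso f H K -> f (gone G) = gone G.
Proof.
  intros sH [_ [_ [_ hom]]].
  assert (E := hom _ _ (sub_one sH) (sub_one sH)). rewrite gmul_1l in E.
  symmetry. apply (gcancel_l (a:=f (gone G))). rewrite gmul_1r. exact E.
Qed.

Lemma iso_inv (G : Group) (f : G -> G) H K a : subgroup H -> subgroup_iso f H K -> H a ->
  f (ginv a) = ginv (f a).
Proof.
  intros sH iso Ha. pose proof (iso_one sH iso) as E1. destruct iso as [_ [_ [_ hom]]].
  assert (E := hom _ _ Ha (sub_inv' sH Ha)). rewrite gmul_Vr, E1 in E.
  apply (gcancel_l (a:=f a)). rewrite gmul_Vr. auto.
Qed.

Lemma iso_eq1 (G : Group) (f : G -> G) H K a : subgroup H -> subgroup_iso f H K -> H a ->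
  f a = gone G -> a = gone G.
Proof.
  intros sH iso Ha E. pose proof (iso_one sH iso) as E1. destruct iso as [_ [inj _]].
  apply inj; auto. apply (sub_one sH). congruence.
Qed.
Definition dclosed (G : Group) (P : family G) := forall A B, P A -> subset B A -> P B.
Definition emptyset (G : Group) : gset G := fun _ => False.

Lemma ltrans_one (G : Group) (A : gset G) g : ltrans (gone G) A g <-> A g.
Proof. unfold ltrans. rewrite ginv_one, gmul_1l. tauto. Qed.

Lemma tau_char (G : Group) (P : family G) A : dclosed P -> left_invariant P ->
  (tau P A <-> forall u, u <> gone G -> P (inter A (ltrans u A))).
Proof.
  intros dP lP. split.
  - intros T u Hu. apply (dP _ _ (T (gone G) u (fun E => Hu (eq_sym E)))).
    intros g [H1 H2]. split; [apply ltrans_one; exact H1| exact H2].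
  - intros T x y Hxy.
    assert (Hu : gmul (ginv x) y <> gone G).
    { intro E. apply Hxy. apply gsolve_l in E. rewrite ginv_inv, gmul_1r in E. auto. }
    apply (dP _ _ (lP _ x (T _ Hu))).
    intros g [H1 H2]. unfold ltrans, inter in *. split; auto.
    rewrite ginv_mul, ginv_inv, <- gmul_assoc, gmulKV. exact H2.
Qed.

Lemma tau_dclosed (G : Group) (P : family G) : dclosed P -> dclosed (tau P).
Proof.
  intros dP A B T S x y Hxy. apply (dP _ _ (T x y Hxy)).
  intros g [H1 H2]; split; apply S; auto.
Qed.

Lemma tau_linv (G : Group) (P : family G) : dclosed P -> left_invariant (tau P).
Proof.
  intros dP A c T x y Hxy.
  assert (Hn : gmul x c <> gmul y c) by (intro E; apply gcancel_r in E; auto).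
  apply (dP _ _ (T _ _ Hn)).
  intros g [H1 H2]; unfold ltrans in *; split; rewrite ginv_mul, <- gmul_assoc; auto.
Qed.

Lemma tau_mono (G : Group) (P Q : family G) A : (forall B, P B -> Q B) -> tau P A -> tau Q A.
Proof. intros PQ T x y Hxy. auto. Qed.

Lemma sub_tau (G : Group) (P : family G) A : dclosed P -> left_invariant P -> P A -> tau P A.
Proof.
  intros dP lP PA x y _. apply (dP _ _ (lP _ x PA)). intros g [H1 _]; exact H1.
Qed.

Lemma tau_ext (G : Group) (P Q : family G) A : (forall B, P B <-> Q B) -> (tau P A <-> tau Q A).
Proof. intros E. split; apply tau_mono; firstorder. Qed.

Lemma tauIter_eq (G : Group) (F : family G) (W : Type) (lt : W -> W -> Prop) (wf : well_founded lt) w A :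
  tauIter F wf w A <-> ((forall b, ~ lt b w) /\ F A) \/ ((exists b, lt b w) /\ tau (tauLt F wf w) A).
Proof.
  unfold tauIter at 1. rewrite Fix_eq.
  - assert (E : forall B, (exists b (h : lt b w), tauIter F wf b B) <-> tauLt F wf w B).
    { intro B; unfold tauLt; split; [intros [b [h H]]; eauto | intros [b [h H]]; eauto]. }
    rewrite (tau_ext A E). tauto.
  - intros x f g Hfg. assert (f = g).
    { extensionality y. extensionality p. auto. }
    subst. reflexivity.
Qed.
Definition Props (G : Group) (P : family G) :=
  dclosed P /\ left_invariant P /\ P (@emptyset G).

Lemma lt_props (G : Group) (F : family G) (W : Type) (lt : W -> W -> Prop) (wf : well_founded lt) w :
  (forall b, lt b w -> Props (tauIter F wf b)) ->
  dclosed (tauLt F wf w) /\ left_invariant (tauLt F wf w) /\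
  ((exists b, lt b w) -> tauLt F wf w (@emptyset G)).
Proof.
  intros IH. split; [|split].
  - intros A B [b [hb HA]] S. exists b; split; auto. destruct (IH b hb) as [d _]. eauto.
  - intros A x [b [hb HA]]. exists b; split; auto. destruct (IH b hb) as [_ [l _]]. eauto.
  - intros [b hb]. exists b; split; auto. apply (IH b hb).
Qed.

Lemma iter_props (G : Group) (F : family G) (W : Type) (lt : W -> W -> Prop) (wf : well_founded lt) :
  ideal F -> left_invariant F -> F (@emptyset G) -> forall w, Props (tauIter F wf w).
Proof.
  intros [dF uF] lF eF w. induction w as [w IH] using (well_founded_ind wf).
  destruct (lt_props IH) as [dL [lL eL]].
  split; [|split].
  - intros A B HA S. rewrite tauIter_eq in *. destruct HA as [[m HA]|[m HA]].
    + left; split; eauto.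
    + right; split; auto. eapply tau_dclosed; eauto.
  - intros A x HA. rewrite tauIter_eq in *. destruct HA as [[m HA]|[m HA]].
    + left; split; eauto.
    + right; split; auto. eapply tau_linv; eauto.
  - rewrite tauIter_eq. destruct (classic (exists b, lt b w)) as [m|m].
    + right; split; auto. apply sub_tau; auto.
    + left; split; auto. intros b hb; apply m; eauto.
Qed.

Lemma iter_mono (G : Group) (F : family G) (W : Type) (lt : W -> W -> Prop) (wf : well_founded lt) :
  ideal F -> left_invariant F -> F (@emptyset G) ->
  forall b c A, lt b c -> tauIter F wf b A -> tauIter F wf c A.
Proof.
  intros iF lF eF b c A hbc HA.
  assert (P := iter_props wf iF lF eF).
  destruct (lt_props (w:=c) (fun b _ => P b)) as [dL [lL _]].
  rewrite tauIter_eq. right; split; eauto.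
  apply sub_tau; auto. exists b; auto.
Qed.

Lemma F_sub_iter (G : Group) (F : family G) (W : Type) (lt : W -> W -> Prop) (wf : well_founded lt) :
  ideal F -> left_invariant F -> F (@emptyset G) ->
  forall w A, F A -> tauIter F wf w A.
Proof.
  intros iF lF eF w. induction w as [w IH] using (well_founded_ind wf). intros A FA.
  assert (P := iter_props wf iF lF eF).
  destruct (lt_props (w:=w) (fun b _ => P b)) as [dL [lL _]].
  rewrite tauIter_eq. destruct (classic (exists b, lt b w)) as [[b m]|m].
  + right; split; eauto. apply sub_tau; auto. exists b; auto.
  + left; split; auto. intros b hb; apply m; eauto.
Qed.
Lemma tau_inv (G : Group) (P : family G) (f : G -> G) (H H' : gset G) :
  subgroup H -> subgroup_iso f H H' -> Props P -> invariant_under P f H ->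
  invariant_under (tau P) f H.
Proof.
  intros sH iso [dP [lP eP]] iP A SA.
  pose proof (iso_one sH iso) as f1.
  assert (iso' := iso). destruct iso' as [_ [inj [_ hom]]].
  rewrite !tau_char by auto. split.
  - intros T v Hv. destruct (classic (exists u, H u /\ f u = v)) as [[u [Hu fu]]|N].
    + assert (Hu1 : u <> gone G) by (intro E; subst; auto).
      assert (Q := T u Hu1). apply iP in Q; [|intros g [Hg _]; auto].
      apply (dP _ _ Q). intros g [[a [Aa fa]] [b [Ab fb]]].
      exists a. split; auto. split; auto. unfold ltrans.
      assert (E : gmul u b = a).
      { apply inj; auto. apply sub_mul; auto. rewrite hom; auto. rewrite fu, fb, fa, gmulKV. auto. }
      rewrite <- E, gmulVK. auto.
    + apply (dP _ _ eP). intros g [[a [Aa fa]] [b [Ab fb]]]. apply N.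
      exists (gmul a (ginv b)). split. apply sub_mul; auto. apply sub_inv'; auto.
      rewrite hom; auto. rewrite (iso_inv sH iso (SA b Ab)), fa, fb, ginv_mul, ginv_inv, gmulKV. auto.
      apply sub_inv'; auto.
  - intros T u Hu. destruct (classic (H u)) as [Hu'|N].
    + assert (Hf : f u <> gone G) by (intro E; apply Hu; eapply iso_eq1; eauto).
      assert (Q := T _ Hf). apply iP; [intros g [Hg _]; auto|].
      apply (dP _ _ Q). intros g [a [[Aa Ba] fa]]. split. exists a; auto.
      exists (gmul (ginv u) a). split; auto.
      rewrite hom; auto. rewrite (iso_inv sH iso Hu'), fa. auto. apply sub_inv'; auto.
    + apply (dP _ _ eP). intros g [Ag Bg]. apply N. unfold ltrans in Bg.
      assert (E : u = gmul g (ginv (gmul (ginv u) g))) by (rewrite ginv_mul, ginv_inv, gmulKV; auto).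
      rewrite E. apply sub_mul; auto. apply sub_inv'; auto.
Qed.

Lemma iter_inv (G : Group) (F : family G) (W : Type) (lt : W -> W -> Prop) (wf : well_founded lt)
  (f : G -> G) (H H' : gset G) :
  ideal F -> left_invariant F -> F (@emptyset G) -> subgroup H -> subgroup_iso f H H' ->
  invariant_under F f H -> forall w, invariant_under (tauIter F wf w) f H.
Proof.
  intros iF lF eF sH iso iFf w. induction w as [w IH] using (well_founded_ind wf).
  assert (P := iter_props wf iF lF eF).
  destruct (lt_props (w:=w) (fun b _ => P b)) as [dL [lL eL]].
  assert (iL : invariant_under (tauLt F wf w) f H).
  { intros A SA. split; intros [b [hb Hb]]; exists b; split; auto.
    apply (proj1 (IH b hb A SA)); auto. apply (proj2 (IH b hb A SA)); auto. }
  intros A SA. rewrite !tauIter_eq.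
  destruct (classic (exists b, lt b w)) as [m|m].
  - assert (T := tau_inv sH iso (conj dL (conj lL (eL m))) iL SA).
    split; (intros [[m' _]|[_ Q]]; [destruct m as [b hb]; exfalso; eapply m'; eauto|right; split; auto; apply T; auto]).
  - assert (m' : forall b, ~ lt b w) by (intros b hb; apply m; eauto).
    split; (intros [[_ Q]|[m'' _]]; [left; split; auto|contradiction]).
    apply (proj1 (iFf A SA)); auto. apply (proj2 (iFf A SA)); auto.
Qed.
Ltac gs := repeat progress (rewrite ?ginv_mul, ?ginv_inv, ?ginv_one, <- ?gmul_assoc, ?gmulKV, ?gmulVK, ?gmul_Vr, ?gmul_Vl, ?gmul_1l, ?gmul_1r).
Ltac gsin X := repeat progress (rewrite ?ginv_mul, ?ginv_inv, ?ginv_one, <- ?gmul_assoc, ?gmulKV, ?gmulVK, ?gmul_Vr, ?gmul_Vl, ?gmul_1l, ?gmul_1r in X).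
Ltac kin sK := repeat (first [solve [eauto] | apply (sub_mul sK) | apply (sub_inv' sK)]); auto.

Definition Sz (G : Group) (z : G) (C : gset G) : gset G := fun g => C g \/ C (gmul (ginv z) g).

Lemma comm_inv (G : Group) (z k : G) : gmul z k = gmul k z -> gmul (ginv z) k = gmul k (ginv z).
Proof.
  intro E. apply (gcancel_l (a:=z)). gs. rewrite gmul_assoc, E. gs. reflexivity.
Qed.

Lemma z_notK (G : Group) (K : gset G) z : subgroup K -> ~ K (gmul z z) -> ~ K z.
Proof. intros sK N Kz. apply N. kin sK. Qed.

Lemma S_inter (G : Group) (K : gset G) (z : G) (C : gset G) u :
  subgroup K -> (forall k, K k -> gmul z k = gmul k z) -> ~ K (gmul z z) -> subset C K ->
  (K u -> subset (inter (Sz z C) (ltrans u (Sz z C))) (Sz z (inter C (ltrans u C)))) /\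
  (~ K u -> K (gmul u z) -> subset (inter (Sz z C) (ltrans u (Sz z C))) C) /\
  (~ K u -> ~ K (gmul u z) -> subset (inter (Sz z C) (ltrans u (Sz z C))) (ltrans z C)).
Proof.
  intros sK cz nzz SC. unfold subset in SC. assert (nz := z_notK sK nzz).
  assert (cK : forall k, K k -> gmul (ginv z) k = gmul k (ginv z)) by (intros; apply comm_inv; auto).
  unfold Sz, inter, ltrans.
  split; [|split]; intros Hu; [|intros Huz..]; intros g [[a|a] [c|c]].
  - left. split; auto.
  - exfalso. apply nz. apply sub_inv; [exact sK|].
    assert (X : K (gmul (gmul (gmul (ginv z) (gmul (ginv u) g)) (ginv g)) u)) by kin sK.
    gsin X. exact X.
  - exfalso. apply nz. apply sub_inv; [exact sK|].
    assert (X : K (gmul (gmul (gmul (ginv z) g) (ginv (gmul (ginv u) g))) (ginv u))) by kin sK.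
    gsin X. exact X.
  - right. split; auto. rewrite gmul_assoc, <- (cK (ginv u)) by kin sK. gs. exact c.
  - exfalso. apply Hu. assert (X : K (gmul g (ginv (gmul (ginv u) g)))) by kin sK.
    gsin X. exact X.
  - exact a.
  - exfalso. apply nzz.
    assert (X : K (gmul (gmul u z) (ginv (gmul (gmul (ginv z) g) (ginv (gmul (ginv u) g)))))) by kin sK.
    gsin X. set (k1 := gmul (ginv z) u).
    assert (Kk : K k1).
    { assert (Y : K (gmul (gmul (ginv z) g) (ginv (gmul (ginv u) g)))) by kin sK. gsin Y. exact Y. }
    assert (E : u = gmul z k1) by (unfold k1; gs; auto).
    rewrite E in X. gsin X. rewrite (gmul_assoc G k1 z (ginv k1)), <- (cz k1 Kk) in X. gsin X. exact X.
  - exfalso. apply Hu.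
    assert (X : K (gmul (gmul (ginv z) g) (ginv (gmul (ginv z) (gmul (ginv u) g))))) by kin sK.
    gsin X. set (k := gmul (ginv z) (gmul u z)) in X.
    assert (E : u = k) by (apply (gcancel_r (a:=z)); rewrite <- (cz k X); unfold k; gs; reflexivity). rewrite E. exact X.
  - exfalso. apply Hu. assert (X : K (gmul g (ginv (gmul (ginv u) g)))) by kin sK.
    gsin X. exact X.
  - exfalso. apply Huz. assert (X : K (gmul g (ginv (gmul (ginv z) (gmul (ginv u) g))))) by kin sK.
    gsin X. exact X.
  - exact a.
  - exfalso. apply Hu.
    assert (X : K (gmul (gmul (ginv z) g) (ginv (gmul (ginv z) (gmul (ginv u) g))))) by kin sK.
    gsin X. set (k := gmul (ginv z) (gmul u z)) in X.
    assert (E : u = k) by (apply (gcancel_r (a:=z)); rewrite <- (cz k X); unfold k; gs; reflexivity). rewrite E. exact X.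
Qed.
Lemma S_a (G : Group) (F : family G) (W : Type) (lt : W -> W -> Prop) (wf : well_founded lt)
  (K : gset G) (z : G) :
  ideal F -> left_invariant F -> F (@emptyset G) ->
  subgroup K -> (forall k, K k -> gmul z k = gmul k z) -> ~ K (gmul z z) ->
  forall w C, subset C K -> tauIter F wf w C -> tau (tauIter F wf w) (Sz z C).
Proof.
  intros iF lF eF sK cz nzz w. induction w as [w IH] using (well_founded_ind wf).
  intros C SC HC.
  assert (P := iter_props wf iF lF eF). destruct (P w) as [dW [lW eW]].
  apply tau_char; auto. intros u Hu.
  destruct (S_inter (C:=C) u sK cz nzz SC) as [S1 [S2 S3]].
  destruct (classic (K u)) as [Ku|Ku].
  - apply (dW _ _ ) with (2 := S1 Ku).
    set (D := inter C (ltrans u C)).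
    assert (SD : subset D K) by (intros g [g1 _]; auto).
    rewrite tauIter_eq in HC. destruct HC as [[m FC]|[[b0 hb0] TC]].
    + apply F_sub_iter; auto. change (F (union D (ltrans z D))).
      destruct iF as [dF uF]. apply uF; auto. apply dF with C; auto. intros g [g1 _]; auto.
      apply lF. apply dF with C; auto. intros g [g1 _]; auto.
    + destruct (lt_props (w:=w) (fun b _ => P b)) as [dL [lL eL]].
      rewrite tau_char in TC by auto. destruct (TC u Hu) as [b [hb Hb]].
      assert (Q := IH b hb D SD Hb).
      rewrite tauIter_eq. right. split. exists b0; auto.
      apply (tau_mono (P := tauIter F wf b)); auto. intros B HB. exists b; auto.
  - destruct (classic (K (gmul u z))) as [Kuz|Kuz].
    + apply (dW _ _ HC (S2 Ku Kuz)).
    + apply (dW _ _ (lW _ z HC) (S3 Ku Kuz)).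
Qed.

Lemma S_b (G : Group) (P : family G) (K : gset G) (z : G) C :
  Props P -> subgroup K -> ~ K (gmul z z) -> tau P (Sz z C) -> P C.
Proof.
  intros [dP [lP eP]] sK nzz T.
  assert (nz : ginv z <> gone G).
  { intro E. apply ginv_eq1 in E. apply (z_notK sK nzz). rewrite E. apply (sub_one sK). }
  rewrite tau_char in T by auto. apply (dP _ _ (T _ nz)).
  intros g Cg. split. left; auto. unfold ltrans, Sz. right. gs. auto.
Qed.
Fixpoint deep (W : Type) (lt : W -> W -> Prop) (n : nat) (w : W) : Prop :=
  match n with O => True | S n => exists b, lt b w /\ deep lt n b end.

Lemma gpow_add (G : Group) (x : G) (a b : nat) : gpow G x (a + b) = gmul (gpow G x a) (gpow G x b).
Proof. induction a; simpl. rewrite gmul_1l; auto. rewrite IHa, gmul_assoc; auto. Qed.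

Lemma no_orbit (G : Group) (H : gset G) v : subgroup H -> torsion_free H -> H v -> v <> gone G ->
  forall l q0, In q0 l -> exists q, In q l /\ ~ In (gmul (ginv v) q) l.
Proof.
  intros sH tH Hv nv l q0 Iq0. apply NNPP. intro N.
  assert (A : forall q, In q l -> In (gmul (ginv v) q) l).
  { intros q Iq. apply NNPP. intro N2. apply N. eauto. }
  set (x := ginv v).
  assert (Hx : H x) by (apply sub_inv'; auto).
  assert (nx : x <> gone G) by (intro E; apply nv; apply ginv_eq1; auto).
  set (it := fun k => gmul (gpow G x k) q0).
  assert (Iit : forall k, In (it k) l).
  { induction k; unfold it in *; simpl. rewrite gmul_1l; auto.
    rewrite <- gmul_assoc. apply A. auto. }
  assert (inj : forall i j, it i = it j -> i = j).
  { assert (K : forall i d, gpow G x i = gpow G x (i + S d) -> False).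
    { intros i d E. rewrite gpow_add in E. rewrite <- (gmul_1r G (gpow G x i)) in E at 1.
      apply gcancel_l in E. apply (tH x Hx nx d). auto. }
    intros i j E. unfold it in E. apply gcancel_r in E.
    destruct (Nat.lt_trichotomy i j) as [h|[h|h]]; auto.
    - exfalso. replace j with (i + S (j - i - 1)) in E by lia. eapply K; eauto.
    - exfalso. replace i with (j + S (i - j - 1)) in E by lia. eapply K; eauto. }
  assert (ND : NoDup (map it (seq 0 (S (length l))))).
  { apply FinFun.Injective_map_NoDup. intros i j; apply inj. apply seq_NoDup. }
  apply NoDup_incl_length with (l' := l) in ND.
  - rewrite length_map, length_seq in ND. lia.
  - intros g Ig. apply in_map_iff in Ig. destruct Ig as [k [E _]]. subst. auto.
Qed.

Lemma remove_one (G : Type) (l : list G) q : In q l ->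
  exists l', S (length l') = length l /\ forall p, In p l -> p <> q -> In p l'.
Proof.
  induction l as [|a t IH]; intros Iq. destruct Iq.
  destruct (classic (a = q)) as [E|E].
  - subst. exists t. split; auto. intros p [E|E] N; [congruence|auto].
  - destruct Iq as [Iq|Iq]; [congruence|]. destruct (IH Iq) as [t' [L T]].
    exists (a :: t'). simpl. split; auto. intros p [E'|E'] N; [left; auto|right; auto].
Qed.

Lemma finite_in_iter (G : Group) (F : family G) (W : Type) (lt : W -> W -> Prop) (wf : well_founded lt)
  (H : gset G) :
  ideal F -> left_invariant F -> F (@emptyset G) -> subgroup H -> torsion_free H ->
  forall n w E l, deep lt n w -> subset E H -> (forall g, E g -> In g l) -> length l <= n ->
  tauIter F wf w E.
Proof.
  intros iF lF eF sH tH. assert (P := iter_props wf iF lF eF).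
  induction n as [|n IH]; intros w E l D SE El L.
  - destruct l; simpl in L; [|lia]. destruct (P w) as [dW [_ eW]].
    apply (dW _ _ eW). intros g Eg. apply (El g Eg).
  - destruct D as [b [hb Db]].
    destruct (lt_props (w:=w) (fun b _ => P b)) as [dL [lL eL]].
    rewrite tauIter_eq. right. split. exists b; auto.
    apply tau_char; auto. intros v nv. exists b. split; auto.
    assert (SI : subset (inter E (ltrans v E)) H) by (intros g [g1 _]; auto).
    destruct (classic (H v)) as [Hv|Hv].
    + destruct l as [|q0 l0].
      * apply (IH b _ nil Db SI); simpl; [|lia]. intros g [g1 _]. apply (El g g1).
      * destruct (no_orbit sH tH Hv nv (l:=q0 :: l0) (q0:=q0) (or_introl eq_refl)) as [q [Iq Nq]].
        destruct (remove_one Iq) as [l' [L' T']].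
        apply (IH b _ l' Db SI); [|simpl in L, L'; lia].
        intros g [g1 g2]. apply T'. auto. intro E'. subst. apply Nq. auto.
    + apply (IH b _ nil Db SI); simpl; [|lia]. intros g [g1 g2]. apply Hv.
      unfold ltrans in g2.
      assert (E' : v = gmul g (ginv (gmul (ginv v) g))) by (gs; auto).
      rewrite E'. apply sub_mul; auto. apply sub_inv'; auto.
Qed.
Lemma list3 (G : Type) (E : G -> Prop) :
  (forall a b c d, E a -> E b -> E c -> E d -> a <> b -> a <> c -> a <> d -> b <> c -> b <> d -> c <> d -> False) ->
  exists l : list G, length l <= 3 /\ forall g, E g -> In g l.
Proof.
  intros N.
  destruct (classic (exists a, E a)) as [[a Ea]|Na].
  2: { exists nil. split; simpl; auto. intros g Eg; apply Na; eauto. }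
  destruct (classic (exists b, E b /\ b <> a)) as [[b [Eb nb]]|Nb].
  2: { exists (a :: nil). split; simpl; auto. intros g Eg. left. apply NNPP; intro X; apply Nb; eauto. }
  destruct (classic (exists c, E c /\ c <> a /\ c <> b)) as [[c [Ec [nca ncb]]]|Nc].
  2: { exists (a :: b :: nil). split; simpl; auto. intros g Eg.
       destruct (classic (g = a)); auto. destruct (classic (g = b)); auto.
       exfalso; apply Nc; eauto. }
  exists (a :: b :: c :: nil). split; simpl; auto. intros g Eg.
  destruct (classic (g = a)); auto. destruct (classic (g = b)); auto. destruct (classic (g = c)); auto.
  exfalso. apply (N a b c g); auto.
Qed.

Lemma points4 (G : Group) (Kap : Type) (pt : G -> Kap -> Kap -> Prop) :
  (forall g g' n m m', pt g n m -> pt g' n m' -> g = g') ->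
  (forall g g' n n' m, pt g n m -> pt g' n' m -> g = g') ->
  (forall g g' n m n' m', pt g n m -> pt g' n' m' -> n <> n' -> n <> m' -> m <> n' -> m <> m' -> False) ->
  forall a b c d, (exists n m, pt a n m) -> (exists n m, pt b n m) -> (exists n m, pt c n m) ->
  (exists n m, pt d n m) ->
  a <> b -> a <> c -> a <> d -> b <> c -> b <> d -> c <> d -> False.
Proof.
  intros F1 F2 F3 a b c d [n1 [m1 P1]] [n2 [m2 P2]] [n3 [m3 P3]] [n4 [m4 P4]] ab ac ad bc bd cd.
  assert (T : forall g n m, pt g n m -> g <> a -> n = m1 \/ m = n1).
  { intros g n m Pg ga.
    destruct (classic (n = n1)) as [e1|e1]. subst. exfalso; apply ga; eapply F1; eauto.
    destruct (classic (m = m1)) as [e2|e2]. subst. exfalso; apply ga; eapply F2; eauto.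
    destruct (classic (n = m1)); auto. destruct (classic (m = n1)); auto.
    exfalso. eapply (F3 g a); eauto. }
  destruct (T _ _ _ P2 (fun e => ab (eq_sym e))) as [e2|e2];
  destruct (T _ _ _ P3 (fun e => ac (eq_sym e))) as [e3|e3];
  destruct (T _ _ _ P4 (fun e => ad (eq_sym e))) as [e4|e4]; subst.
  all: first [apply bc; eapply F1; eassumption | apply bd; eapply F1; eassumption
            | apply cd; eapply F1; eassumption | apply bc; eapply F2; eassumption
            | apply bd; eapply F2; eassumption | apply cd; eapply F2; eassumption].
Qed.
Definition Good (G : Group) (F : family G) (W : Type) (lt : W -> W -> Prop) (wf : well_founded lt)
  (H : gset G) (w : W) (B : gset G) :=
  subset B H /\ ~ B (gone G) /\ tau (tauIter F wf w) B /\ ~ tauIter F wf w B.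

Lemma limit_case (G : Group) (F : family G) (H : gset G) (Kap : Type) (Hs : Kap -> gset G)
  (hs : Kap -> G -> G) (W : Type) (lt : W -> W -> Prop) (wf : well_founded lt) (fW : W -> Kap) :
  ideal F -> left_invariant F -> F (@emptyset G) -> subgroup H -> torsion_free H ->
  (forall n, subgroup (Hs n) /\ subset (Hs n) H /\
             subgroup_iso (hs n) H (Hs n) /\ invariant_under F (hs n) H) ->
  (forall n m k l, n <> k -> n <> l -> m <> k -> m <> l ->
     forall g, (prodset (Hs n) (Hs m) g /\ prodset (Hs k) (Hs l) g) <-> g = gone G) ->
  (forall a b, fW a = fW b -> a = b) ->
  forall w (Bs : W -> gset G),
  (exists b, lt b w) -> (forall b, lt b w -> exists c, lt b c /\ lt c w) ->
  (forall b, lt b w -> Good F wf H b (Bs b)) ->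
  let U := fun g => exists b, lt b w /\ image (hs (fW b)) (Bs b) g in
  subset U H /\ ~ U (gone G) /\ tauIter F wf w U /\ ~ tauLt F wf w U.
Proof.
  intros iF lF eF sH tH HsP Hd injW w Bs [b0 hb0] lim GB U.
  assert (P := iter_props wf iF lF eF).
  assert (disj1 : forall n k g, n <> k -> Hs n g -> Hs k g -> g = gone G).
  { intros n k g nk Hn Hk. apply (Hd n n k k nk nk nk nk g). split.
    exists g, (gone G). repeat split; auto. apply sub_one, HsP. apply gmul_1r.
    exists g, (gone G). repeat split; auto. apply sub_one, HsP. apply gmul_1r. }
  assert (inv : forall n w', invariant_under (tauIter F wf w') (hs n) H).
  { intros n w'. destruct (HsP n) as [_ [_ [iso iv]]]. eapply iter_inv; eauto. }
  assert (noe : forall b a, lt b w -> Bs b a -> hs (fW b) a <> gone G).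
  { intros b a hb Ba E. destruct (GB b hb) as [SB [nB _]]. apply nB.
    destruct (HsP (fW b)) as [_ [_ [iso _]]]. rewrite <- (iso_eq1 sH iso (SB a Ba) E). auto. }
  split; [|split; [|split]].
  - intros g [b [hb [a [Ba E]]]]. subst. destruct (HsP (fW b)) as [_ [S [[i _] _]]].
    apply S, i. apply (GB b hb); auto.
  - intros [b [hb [a [Ba E]]]]. eapply noe; eauto.
  - destruct (lt_props (w:=w) (fun b _ => P b)) as [dL [lL eL]].
    rewrite tauIter_eq. right. split. exists b0; auto.
    apply tau_char; auto. intros u nu.
    destruct (classic (exists b, lt b w /\ Hs (fW b) u)) as [[b [hb Hu]]|Nu].
    +
      set (n := fW b) in *.
      destruct (HsP n) as [sn [Sn [iso ivn]]].
      assert (iso' := iso). destruct iso' as [imn [injn [surn homn]]].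
      destruct (surn u Hu) as [v [Hv fv]].
      assert (nv : v <> gone G) by (intro E; subst; apply nu; apply (iso_one sH iso)).
      destruct (GB b hb) as [SB [nB [TB _]]].
      destruct (P b) as [dB [lB eB]].
      rewrite tau_char in TB by auto. assert (D := TB v nv).
      apply (inv n b) in D; [|intros g [g1 _]; auto].
      exists b. split; auto. apply (dB _ _ D).
      intros g [[i [hi [a [Ba Ea]]]] [j [hj [c [Bc Ec]]]]].
      destruct (GB i hi) as [SBi [nBi _]]. destruct (GB j hj) as [SBj [nBj _]].
      destruct (HsP (fW i)) as [_ [_ [[imi _] _]]]. destruct (HsP (fW j)) as [_ [_ [[imj _] _]]].
      assert (Hgi : Hs (fW i) g) by (rewrite <- Ea; auto).
      assert (Hgj : Hs (fW j) (gmul (ginv u) g)) by (rewrite <- Ec; auto).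
      assert (ei : fW i = n).
      { apply NNPP; intro ni. destruct (classic (fW j = n)) as [ej|ej].
        - rewrite ej in Hgj. assert (Hgn : Hs n g).
          { replace g with (gmul u (gmul (ginv u) g)) by (gs; auto). apply sub_mul; auto. }
          apply (noe i a hi Ba). rewrite Ea. apply (disj1 _ _ _ ni Hgi Hgn).
        - apply nu. apply (Hd (fW i) (fW j) n n ni ni ej ej u). split.
          + exists g, (ginv (gmul (ginv u) g)). repeat split; auto. apply sub_inv'; auto. apply HsP. gs; auto.
          + exists u, (gone G). repeat split; auto. apply sub_one; auto. apply gmul_1r. }
      assert (ej : fW j = n).
      { apply NNPP; intro nj. apply (noe j c hj Bc). rewrite Ec. apply (disj1 _ _ _ nj Hgj).
        rewrite ei in Hgi. apply sub_mul; auto. apply sub_inv'; auto. }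
      apply injW in ei. apply injW in ej. subst i j.
      exists a. split; auto. split; auto. unfold ltrans.
      assert (E : gmul v c = a).
      { apply injn; auto. apply sub_mul; auto. rewrite homn; auto. rewrite fv. fold n in Ec, Ea.
        rewrite Ec, Ea. gs. auto. }
      rewrite <- E. gs. auto.
    +
      destruct (lim b0 hb0) as [b1 [h01 h1]]. destruct (lim b1 h1) as [b2 [h12 h2]].
      destruct (lim b2 h2) as [b3 [h23 h3]].
      exists b3. split; auto.
      set (E := inter U (ltrans u U)).
      set (pt := fun g n m => Hs n g /\ Hs m (gmul (ginv u) g) /\ ~ Hs n u /\ ~ Hs m u).
      assert (F0 : forall g n m, pt g n m -> n <> m).
      { intros g n m [p1 [p2 [p3 p4]]] e. subst. apply p3.
        replace u with (gmul g (ginv (gmul (ginv u) g))) by (gs; auto).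
        apply sub_mul; [apply HsP|auto|]. apply sub_inv'; auto. apply HsP. }
      assert (key : forall x, x = gone G -> forall g g', gmul (ginv g) g' = x -> g = g').
      { intros x ex g g' e. subst. apply gsolve_l in e. rewrite gmul_1r, ginv_inv in e. auto. }
      assert (F1 : forall g g' n m m', pt g n m -> pt g' n m' -> g = g').
      { intros g g' n m m' P1 P2. pose proof (F0 _ _ _ P1). pose proof (F0 _ _ _ P2).
        destruct P1 as [p1 [p2 _]]. destruct P2 as [q1 [q2 _]].
        apply (key (gmul (ginv g) g')); auto.
        apply (Hd m m' n n); auto. split.
        - exists (ginv (gmul (ginv u) g)), (gmul (ginv u) g'). repeat split; auto.
          apply sub_inv'; auto. apply HsP. gs; auto.
        - exists (ginv g), g'. repeat split; auto. apply sub_inv'; auto. apply HsP. }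
      assert (F2 : forall g g' n n' m, pt g n m -> pt g' n' m -> g = g').
      { intros g g' n n' m P1 P2. pose proof (F0 _ _ _ P1). pose proof (F0 _ _ _ P2).
        destruct P1 as [p1 [p2 _]]. destruct P2 as [q1 [q2 _]].
        apply (key (gmul (ginv g) g')); auto.
        apply (Hd n n' m m); auto. split.
        - exists (ginv g), g'. repeat split; auto. apply sub_inv'; auto. apply HsP.
        - exists (ginv (gmul (ginv u) g)), (gmul (ginv u) g'). repeat split; auto.
          apply sub_inv'; auto. apply HsP. gs; auto. }
      assert (F3 : forall g g' n m n' m', pt g n m -> pt g' n' m' -> n <> n' -> n <> m' -> m <> n' -> m <> m' -> False).
      { intros g g' n m n' m' P1 P2 a1 a2 a3 a4.
        destruct P1 as [p1 [p2 _]]. destruct P2 as [q1 [q2 _]].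
        apply nu. apply (Hd n m n' m' a1 a2 a3 a4 u). split.
        - exists g, (ginv (gmul (ginv u) g)). repeat split; auto. apply sub_inv'; auto. apply HsP. gs; auto.
        - exists g', (ginv (gmul (ginv u) g')). repeat split; auto. apply sub_inv'; auto. apply HsP. gs; auto. }
      assert (Ept : forall g, E g -> exists n m, pt g n m).
      { intros g [[i [hi [a [Ba Ea]]]] [j [hj [c [Bc Ec]]]]].
        exists (fW i), (fW j). unfold pt.
        destruct (HsP (fW i)) as [_ [_ [[imi _] _]]]. destruct (HsP (fW j)) as [_ [_ [[imj _] _]]].
        destruct (GB i hi) as [SBi _]. destruct (GB j hj) as [SBj _].
        split. rewrite <- Ea; auto. split. rewrite <- Ec; auto.
        split; intro X; apply Nu; eauto. }
      assert (N4 : forall a b c d, E a -> E b -> E c -> E d -> a <> b -> a <> c -> a <> d -> b <> c -> b <> d -> c <> d -> False).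
      { intros a b c d Ea Eb Ec Ed. apply (points4 F1 F2 F3); auto. }
      destruct (@list3 _ E N4) as [l [L El]].
      apply (finite_in_iter wf iF lF eF sH tH (n:=3) (w:=b3) (E:=E) (l:=l)); auto.
      * simpl. exists b2; split; auto. exists b1; split; auto. exists b0; split; auto.
      * intros g [[i [hi [a [Ba Ea]]]] _]. subst g. destruct (HsP (fW i)) as [_ [S [[imi _] _]]].
        apply S, imi. apply (GB i hi); auto.
  - intros [b [hb Hb]]. destruct (GB b hb) as [SB [_ [_ nB]]]. apply nB.
    apply (proj2 (inv (fW b) b (Bs b) SB)).
    destruct (P b) as [dB _]. apply (dB _ _ Hb). intros g Ig. exists b. auto.
Qed.
Lemma step_lemma (G : Group) (F : family G) (H K : gset G) (h : G -> G) (z : G)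
  (W : Type) (lt : W -> W -> Prop) (wf : well_founded lt) :
  ideal F -> left_invariant F -> F (@emptyset G) -> subgroup H -> subgroup K -> subset K H ->
  subgroup_iso h H K -> invariant_under F h H ->
  H z -> (forall k, K k -> gmul z k = gmul k z) -> ~ K (gmul z z) ->
  forall w C, (exists b, lt b w) -> subset C H -> ~ C (gone G) -> tauIter F wf w C -> ~ tauLt F wf w C ->
  Good F wf H w (Sz z (image h C)).
Proof.
  intros iF lF eF sH sK KH iso ivh Hz cz nzz w C [b0 hb0] SC nC TC NC.
  assert (P := iter_props wf iF lF eF).
  assert (inv : forall w', invariant_under (tauIter F wf w') h H) by (intro; eapply iter_inv; eauto).
  assert (iso' := iso). destruct iso' as [im [inj _]].
  set (hC := image h C).
  assert (ShC : subset hC K) by (intros g [a [Ca E]]; subst; auto).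
  assert (ThC : tauIter F wf w hC) by (apply (proj1 (inv w C SC)); auto).
  assert (NhC : ~ tauLt F wf w hC).
  { intros [b [hb Hb]]. apply NC. exists b. split; auto. apply (proj2 (inv b C SC)); auto. }
  assert (nz := z_notK sK nzz).
  split; [|split; [|split]].
  - intros g [Hg|Hg]. apply KH, ShC; auto.
    replace g with (gmul z (gmul (ginv z) g)) by (gs; auto). apply sub_mul; auto.
  - intros [Hg|Hg].
    + destruct Hg as [a [Ca E]]. apply nC. rewrite <- (iso_eq1 sH iso (SC a Ca) E). auto.
    + apply nz. apply (sub_inv sK). rewrite <- (gmul_1r G (ginv z)). apply ShC; auto.
  - eapply S_a; eauto.
  - intros T. rewrite tauIter_eq in T. destruct T as [[m _]|[_ T]]. eapply m; eauto.
    destruct (lt_props (w:=w) (fun b _ => P b)) as [dL [lL eL]].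
    apply NhC. apply (S_b (K:=K) (z:=z)); auto. split; auto. split; auto. apply eL. eauto.
Qed.

Lemma mid_lemma (G : Group) (F : family G) (H : gset G) (Kap : Type) (Hs : Kap -> gset G)
  (hs : Kap -> G -> G) (W : Type) (lt : W -> W -> Prop) (wf : well_founded lt) (fW : W -> Kap) :
  ideal F -> left_invariant F -> F (@emptyset G) -> subgroup H -> torsion_free H ->
  (forall n, subgroup (Hs n) /\ subset (Hs n) H /\
             subgroup_iso (hs n) H (Hs n) /\ invariant_under F (hs n) H) ->
  (forall n m k l, n <> k -> n <> l -> m <> k -> m <> l ->
     forall g, (prodset (Hs n) (Hs m) g /\ prodset (Hs k) (Hs l) g) <-> g = gone G) ->
  (forall a b, fW a = fW b -> a = b) -> strict_total_order lt ->
  forall w, (exists b, lt b w) -> (forall b, lt b w -> exists B, Good F wf H b B) ->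
  exists C, subset C H /\ ~ C (gone G) /\ tauIter F wf w C /\ ~ tauLt F wf w C.
Proof.
  intros iF lF eF sH tH HsP Hd injW [ltT ltC] w [b0 hb0] IH.
  assert (P := iter_props wf iF lF eF).
  destruct (classic (exists v, lt v w /\ forall c, lt v c -> ~ lt c w)) as [[v [hv mx]]|Nl].
  - destruct (IH v hv) as [B [SB [nB [TB NB]]]]. exists B. split; auto. split; auto. split.
    + rewrite tauIter_eq. right. split. eauto.
      apply (tau_mono (P := tauIter F wf v)); auto. intros A HA. exists v; auto.
    + intros [b [hb Hb]]. apply NB.
      destruct (ltC b v) as [l|[e|l]].
      * eapply iter_mono; eauto.
      * subst; auto.
      * exfalso. eapply mx; eauto.
  - assert (lim : forall b, lt b w -> exists c, lt b c /\ lt c w).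
    { intros b hb. apply NNPP. intro N. apply Nl. exists b. split; auto.
      intros c hc hcw. apply N. eauto. }
    assert (ex : forall b, exists B, lt b w -> Good F wf H b B).
    { intro b. destruct (classic (lt b w)) as [hb|hb].
      - destruct (IH b hb) as [B GB]. exists B; auto.
      - exists (@emptyset G). intro; contradiction. }
    set (Bs := fun b => proj1_sig (constructive_indefinite_description _ (ex b))).
    assert (GB : forall b, lt b w -> Good F wf H b (Bs b)).
    { intros b hb. unfold Bs. destruct (constructive_indefinite_description _ (ex b)) as [B GB]. simpl. auto. }
    eexists. eapply (limit_case (wf:=wf) (Bs:=Bs) iF lF eF sH tH HsP Hd injW); eauto.
Qed.
Theorem lemma6p7
  (G : Group) (F : family G) (H K : gset G) (h : G -> G) (z : G)
  (Kap : Type) (Hs : Kap -> gset G) (hs : Kap -> G -> G) :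
  ideal F -> left_invariant F ->
  subgroup H -> subgroup K -> subset K H ->
  torsion_free H -> torsion_free K ->
  subgroup_iso h H K -> invariant_under F h H ->
  H z -> (forall k, K k -> gmul z k = gmul k z) -> ~ K (gmul z z) ->
  (* kappa is an infinite cardinal, represented by the index type Kap *)
  (exists f : nat -> Kap, forall i j, f i = f j -> i = j) ->
  (forall n, subgroup (Hs n) /\ subset (Hs n) H /\
             subgroup_iso (hs n) H (Hs n) /\ invariant_under F (hs n) H) ->
  (forall n m k l, n <> k -> n <> l -> m <> k -> m <> l ->
     forall g, (prodset (Hs n) (Hs m) g /\ prodset (Hs k) (Hs l) g) <-> g = gone G) ->
  (exists A, tau F A /\ subset A H /\ ~ F A) ->
  (* every ordinal alpha < kappa^+ is the order type of the initial segment
     below some element w of a well-ordered set W of cardinality <= kappa *)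
  forall (W : Type) (lt : W -> W -> Prop) (wf : well_founded lt),
    strict_total_order lt ->
    (exists f : W -> Kap, forall a b, f a = f b -> a = b) ->
    forall w : W,
      ~ (forall A, tauIter F wf w A <-> tauLt F wf w A).
Proof.
  intros iF lF sH sK KH tH tK iso ivh Hz cz nzz _ HsP Hd [A0 [TA0 [SA0 NA0]]] W lt wf sto [fW injW] w.
  assert (nz := z_notK sK nzz).
  assert (z1 : z <> gone G) by (intro E; apply nz; rewrite E; apply (sub_one sK)).
  destruct iF as [dF uF].
  assert (eF : F (@emptyset G)).
  { assert (X := TA0 (gone G) z (fun E => z1 (eq_sym E))). apply (dF _ _ X). intros g []. }
  assert (iF : ideal F) by (split; auto).
  assert (P := iter_props wf iF lF eF).
  assert (A1ex : exists A1, subset A1 H /\ ~ A1 (gone G) /\ tau F A1 /\ ~ F A1).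
  { destruct (classic (exists a, H a /\ ~ A0 a)) as [[a [Ha Na]]|N].
    - exists (ltrans (ginv a) A0). split; [|split; [|split]].
      + intros g Ag. unfold ltrans in Ag. rewrite ginv_inv in Ag. replace g with (gmul (ginv a) (gmul a g)) by (gs; auto).
        apply sub_mul; auto. apply sub_inv'; auto.
      + unfold ltrans. rewrite ginv_inv, gmul_1r. auto.
      + apply (tau_linv dF (A:=A0) (ginv a) TA0).
      + intro X. apply NA0. apply (dF _ _ (lF _ a X)). intros g Ag. unfold ltrans. rewrite ginv_inv. gs. auto.
    - exfalso. apply NA0. assert (nz' : ginv z <> gone G) by (intro E; apply z1; apply ginv_eq1; auto).
      rewrite (tau_char A0 dF lF) in TA0. apply (dF _ _ (TA0 _ nz')).
      intros g Ag. split; auto. unfold ltrans. rewrite ginv_inv.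
      apply NNPP. intro X. apply N. exists (gmul z g). split; auto. apply sub_mul; auto. }
  destruct A1ex as [A1 [SA1 [nA1 [TA1 NA1]]]].
  assert (ex : forall w, exists B, Good F wf H w B).
  { intro w0. induction w0 as [w0 IH] using (well_founded_ind wf).
    destruct (classic (exists b, lt b w0)) as [m|m].
    - destruct (mid_lemma (wf:=wf) iF lF eF sH tH HsP Hd injW sto m IH) as [C [SC [nC [TC NC]]]].
      exists (Sz z (image h C)). eapply step_lemma; eauto.
    - assert (E : forall B, tauIter F wf w0 B <-> F B).
      { intro B. rewrite tauIter_eq. split.
        - intros [[_ X]|[X _]]; auto. contradiction.
        - intros X. left. split; auto. intros b hb; apply m; eauto. }
      exists A1. split; auto. split; auto. split.
      + apply (tau_ext A1 E). auto.
      + rewrite E. auto. }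
  intro Eq.
  destruct (classic (exists b, lt b w)) as [m|m].
  - destruct (mid_lemma (wf:=wf) iF lF eF sH tH HsP Hd injW sto m (fun b _ => ex b)) as [C [_ [_ [TC NC]]]].
    apply NC. apply Eq. auto.
  - destruct (P w) as [_ [_ eW]]. apply Eq in eW. destruct eW as [b [hb _]]. apply m; eauto.
Qed.
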